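(* Let $\alpha,\beta,\gamma\in\mathbb{Z}_2^n$ and $a,b\in\mathbb{Z}_2$, and let $\omega=\omega(\alpha,\beta,\gamma)$. Then $\mathrm{padp}_{a,b}(\alpha,\beta,\gamma)=0$ if and only if $\omega$ satisfies at least one pattern in the list $Q_{a,b}$, where: $Q_{0,0}$: [.*d0*], [6$\hat6$*7.*], [7$\hat7$*6.*], [7$\hat7$*0$\gamma_0$*]; $Q_{0,1}$: [.*d0*], [4$\hat4$*5.*], [4$\hat4$*0$\beta_0$*], [5$\hat5$*], [5$\hat5$*4.*], [5$\hat5$*1$\beta_0$*], [5$\hat5$*2$\gamma_0$*], [$\beta_0$*]; $Q_{1,0}$: [.*d0*], [2$\hat2$*3.*], [2$\hat2$*0$\alpha_0$*], [3$\hat3$*], [3$\hat3$*2.*], [3$\hat3$*1$\alpha_0$*], [3$\hat3$*4$\gamma_0$*], [$\alpha_0$*]; $Q_{1,1}$: [.*d0*], [0$\hat0$*], [0$\hat0$*1.*], [0$\hat0$*2$\alpha_0$*], [0$\hat0$*4$\beta_0$*], [1$\hat1$*0.*], [1$\hat1$*3$\alpha_0$*], [1$\hat1$*5$\beta_0$*], [1$\hat1$*6$\gamma_0$*], [$\alpha_0$*], [$\beta_0$*].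
   Context: For $\alpha,\beta,\gamma\in\mathbb{Z}_2^n$ (with $x=(x_0,\dots,x_{n-1})$, $x_0$ most significant) the octal word $\omega(\alpha,\beta,\gamma)\in\{0,\dots,7\}^n$ has symbols $\omega_i=4\alpha_i+2\beta_i+\gamma_i$; indices $0,\dots,7$ are identified with $\mathbb{Z}_2^3$ via $(p_0,p_1,p_2)\leftrightarrow4p_0+2p_1+p_2$, so $\oplus$ applies to them. $e_0,\dots,e_7$ are the standard basis row vectors of $\mathbb{Q}^8$. $A_0$ is $\frac14$ times the $8\times8$ matrix with rows $(4,0,0,1,0,1,1,0)$, $(0,0,0,1,0,1,0,0)$, $(0,0,0,1,0,0,1,0)$, $(0,0,0,1,0,0,0,0)$, $(0,0,0,0,0,1,1,0)$, $(0,0,0,0,0,1,0,0)$, $(0,0,0,0,0,0,1,0)$, $(0,\dots,0)$, and $(A_k)_{i,j}=(A_0)_{i\oplus k,j\oplus k}$. With $L_{0,0}=(1,1,0,0,0,0,0,0)$, $L_{0,1}=(0,0,1,1,0,0,0,0)$, $L_{1,0}=(0,0,0,0,1,1,0,0)$, $L_{1,1}=(0,0,0,0,0,0,1,1)$, $\mathrm{padp}_{a,b}(\alpha,\beta,\gamma)=L_{a,b}A_{\omega_0}\cdots A_{\omega_{n-1}}e_0^T$. Patterns: a pattern is written between [ (most significant end) and ] (least significant end), and a word satisfies it if the whole word $\omega_0\cdots\omega_{n-1}$ matches it as a regular expression, where each pattern symbol matches one octal symbol: a digit $t$ matches exactly $t$; '.' matches any symbol; d matches $1,2,4,7$; e matches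 $0,3,5,6$; $\hat t$ matches $t,t\oplus3,t\oplus5$; $\alpha_0$ matches $0,1,2,3$; $\beta_0$ matches $0,1,4,5$; $\gamma_0$ matches $0,2,4,6$; s* matches zero or more consecutive symbols each matched by s. *)

(* Defs.v *)
From mathcomp Require Import all_boot all_algebra.
Set Implicit Arguments. Unset Strict Implicit. Unset Printing Implicit Defensive.
Import GRing.Theory.
Local Open Scope ring_scope.

(* Octal symbols are elements of 'I_8; the index i <-> (p0,p1,p2) with
   i = 4 p0 + 2 p1 + p2, so bitwise xor on Z_2^3 is Nat.lxor on the values. *)
Definition ord8 (m : nat) : 'I_8 := Ordinal (ltn_pmod m (isT : (0 < 8)%N)).
Definition xor8 (i k : 'I_8) : 'I_8 := ord8 (Nat.lxor i k).

(* 4 * A_0 as a table of naturals (rows listed top to bottom) *)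
Definition A0rows : seq (seq nat) :=
  [:: [:: 4; 0; 0; 1; 0; 1; 1; 0];
      [:: 0; 0; 0; 1; 0; 1; 0; 0];
      [:: 0; 0; 0; 1; 0; 0; 1; 0];
      [:: 0; 0; 0; 1; 0; 0; 0; 0];
      [:: 0; 0; 0; 0; 0; 1; 1; 0];
      [:: 0; 0; 0; 0; 0; 1; 0; 0];
      [:: 0; 0; 0; 0; 0; 0; 1; 0];
      [:: 0; 0; 0; 0; 0; 0; 0; 0]].

Definition A0 : 'M[rat]_8 :=
  \matrix_(i < 8, j < 8) ((nth 0%N (nth [::] A0rows i) j)%:R / 4%:R).

Definition Amat (k : 'I_8) : 'M[rat]_8 :=
  \matrix_(i < 8, j < 8) A0 (xor8 i k) (xor8 j k).

Definition Lvec (a b : bool) : 'rV[rat]_8 :=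
  \row_(j < 8) (if j./2 == (2 * a + b)%N then 1 else 0).

Definition e0 : 'rV[rat]_8 := \row_(j < 8) (if j == 0%N :> nat then 1 else 0).

Definition omega (n : nat) (al be ga : n.-tuple bool) : seq 'I_8 :=
  mkseq (fun i => ord8 (4 * nth false al i + 2 * nth false be i
                          + nth false ga i)%N) n.

Definition padp (a b : bool) (n : nat) (al be ga : n.-tuple bool) : rat :=
  (Lvec a b *m (\big[mulmx/1%:M]_(k <- omega al be ga) Amat k) *m e0^T) 0 0.

Inductive item := One of pred 'I_8 | Star of pred 'I_8.

Fixpoint pmatch (p : seq item) (w : seq 'I_8) : bool :=
  match p with
  | [::] => w == [::]
  | One c :: p' => if w is x :: w' then c x && pmatch p' w' else false
  | Star c :: p' =>
      has (fun k => all c (take k w) && pmatch p' (drop k w)) (iota 0 (size w).+1)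
  end.

Definition cD (t : nat) : pred 'I_8 := fun x => val x == t.
Definition cAny : pred 'I_8 := predT.
Definition cd : pred 'I_8 := fun x => val x \in [:: 1; 2; 4; 7]%N.
Definition ce : pred 'I_8 := fun x => val x \in [:: 0; 3; 5; 6]%N.
Definition chat (t : 'I_8) : pred 'I_8 :=
  fun x => [|| x == t, x == xor8 t (ord8 3) | x == xor8 t (ord8 5)].
Definition calpha0 : pred 'I_8 := fun x => val x \in [:: 0; 1; 2; 3]%N.
Definition cbeta0  : pred 'I_8 := fun x => val x \in [:: 0; 1; 4; 5]%N.
Definition cgamma0 : pred 'I_8 := fun x => val x \in [:: 0; 2; 4; 6]%N.

Definition dig (t : nat) := One (cD t).
Definition hatS (t : nat) := Star (chat (ord8 t)).

Definition P_d0 : seq item := [:: Star cAny; One cd; Star (cD 0)].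

Definition Q (a b : bool) : seq (seq item) :=
  match a, b with
  | false, false =>
      [:: P_d0;
          [:: dig 6; hatS 6; dig 7; Star cAny];
          [:: dig 7; hatS 7; dig 6; Star cAny];
          [:: dig 7; hatS 7; dig 0; Star cgamma0]]
  | false, true =>
      [:: P_d0;
          [:: dig 4; hatS 4; dig 5; Star cAny];
          [:: dig 4; hatS 4; dig 0; Star cbeta0];
          [:: dig 5; hatS 5];
          [:: dig 5; hatS 5; dig 4; Star cAny];
          [:: dig 5; hatS 5; dig 1; Star cbeta0];
          [:: dig 5; hatS 5; dig 2; Star cgamma0];
          [:: Star cbeta0]]
  | true, false =>
      [:: P_d0;
          [:: dig 2; hatS 2; dig 3; Star cAny];
          [:: dig 2; hatS 2; dig 0; Star calpha0];
          [:: dig 3; hatS 3];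
          [:: dig 3; hatS 3; dig 2; Star cAny];
          [:: dig 3; hatS 3; dig 1; Star calpha0];
          [:: dig 3; hatS 3; dig 4; Star cgamma0];
          [:: Star calpha0]]
  | true, true =>
      [:: P_d0;
          [:: dig 0; hatS 0];
          [:: dig 0; hatS 0; dig 1; Star cAny];
          [:: dig 0; hatS 0; dig 2; Star calpha0];
          [:: dig 0; hatS 0; dig 4; Star cbeta0];
          [:: dig 1; hatS 1; dig 0; Star cAny];
          [:: dig 1; hatS 1; dig 3; Star calpha0];
          [:: dig 1; hatS 1; dig 5; Star cbeta0];
          [:: dig 1; hatS 1; dig 6; Star cgamma0];
          [:: Star calpha0];
          [:: Star cbeta0]]
  end.

Definition satisfies_some (ps : seq (seq item)) (w : seq 'I_8) : bool :=
  has (fun p => pmatch p w) ps.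

(* Main.v *)
Require Import Defs.
From mathcomp Require Import all_boot all_algebra.
Set Implicit Arguments. Unset Strict Implicit. Unset Printing Implicit Defensive.
Import GRing.Theory Num.Theory.
Local Open Scope ring_scope.

Lemma pmatch_starE c p w :
  pmatch (Star c :: p) w =
  has (fun k => all c (take k w) && pmatch p (drop k w)) (iota 0 (size w).+1).
Proof. by []. Qed.

Lemma hasC T (a : pred T) y s : has a (y :: s) = a y || has a s.
Proof. by []. Qed.

Lemma pmatch_cons_star c p x w :
  pmatch (Star c :: p) (x :: w) = (c x && pmatch (Star c :: p) w) || pmatch p (x :: w).
Proof.
have E : iota 0 (size (x :: w)).+1 = 0%N :: map (addn 1) (iota 0 (size w).+1).
  by rewrite -iotaDl.
rewrite [in LHS]pmatch_starE E hasC has_map take0 drop0.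
have -> : all c [::] = true by [].
rewrite andTb orbC; congr (_ || _).
rewrite pmatch_starE.
case cx: (c x); [apply: eq_has => k | apply/hasPn => k _];
  by rewrite /preim /= cx.
Qed.

Fixpoint dsuf (q : seq item) (k : nat) (x : 'I_8) : seq nat :=
  match q with
  | [::] => [::]
  | One c :: _ => if c x then [:: k.+1] else [::]
  | Star c :: q' => (if c x then [:: k] else [::]) ++ dsuf q' k.+1 x
  end.

Lemma dsuf_ok x w q : forall P k, drop k P = q ->
  pmatch q (x :: w) = has (fun j => pmatch (drop j P) w) (dsuf q k x).
Proof.
elim: q => [|[c|c] q IH] P k Hq; first by [].
- have Hq' : drop k.+1 P = q by rewrite -add1n -drop_drop Hq drop1.
  have -> : pmatch (One c :: q) (x :: w) = c x && pmatch q w by [].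
  by rewrite [dsuf _ _ _]/=; case: (c x); rewrite /= ?Hq' ?orbF.
- have Hq' : drop k.+1 P = q by rewrite -add1n -drop_drop Hq drop1.
  rewrite pmatch_cons_star [dsuf _ _ _]/= has_cat -(IH P k.+1 Hq').
  congr (_ || _); case: (c x) => //.
  by rewrite hasC Hq orbF.
Qed.

Definition spos (Qs : seq (seq item)) (ik : nat * nat) := drop ik.2 (nth [::] Qs ik.1).
Definition lexr (a b : nat * nat) := (a.1 < b.1)%N || ((a.1 == b.1) && (a.2 <= b.2)%N).
Definition pstep Qs x (S : seq (nat * nat)) :=
  undup (sort lexr (flatten [seq [seq (ik.1, j) | j <- dsuf (spos Qs ik) ik.2 x] | ik <- S])).

Lemma pstep_ok Qs x w S :
  has (fun ik => pmatch (spos Qs ik) w) (pstep Qs x S) =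
  has (fun ik => pmatch (spos Qs ik) (x :: w)) S.
Proof.
rewrite /pstep.
have -> : forall s, has (fun ik => pmatch (spos Qs ik) w) (undup (sort lexr s)) =
                    has (fun ik => pmatch (spos Qs ik) w) s.
  by move=> s; apply: eq_has_r => y; rewrite mem_undup mem_sort.
elim: S => [|ik S IH] //=; rewrite has_cat IH; congr (_ || _).
rewrite has_map /spos /=.
by rewrite (dsuf_ok x w (P := nth [::] Qs ik.1) (k := ik.2)).
Qed.

Definition tblN (i j : nat) : nat := nth 0%N (nth [::] A0rows i) j.
Definition sstep (x : nat) (s : seq bool) : seq bool :=
  mkseq (fun j => has (fun i => nth false s i &&
           (tblN (Nat.lxor i x %% 8) (Nat.lxor j x %% 8) != 0%N)) (iota 0 8)) 8.
Definition supp (u : 'rV[rat]_8) : seq bool := mkseq (fun j => u 0 (inord j) != 0) 8.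
Definition nonneg (u : 'rV[rat]_8) := forall j, 0 <= u 0 j.

Lemma Amat_ge0 x i j : 0 <= Amat x i j.
Proof. by rewrite !mxE divr_ge0 ?ler0n. Qed.

Lemma Amat_eq0 y i j : (Amat y i j == 0) =
  (tblN (Nat.lxor i y %% 8) (Nat.lxor j y %% 8) == 0%N).
Proof. by rewrite !mxE mulf_eq0 invr_eq0 !pnatr_eq0 orbF. Qed.

Lemma step_nonneg u x : nonneg u -> nonneg (u *m Amat x).
Proof.
move=> H j; rewrite mxE; apply: sumr_ge0 => i _; apply: mulr_ge0 => //; exact: Amat_ge0.
Qed.

Lemma step_supp u y : nonneg u -> supp (u *m Amat y) = sstep (val y) (supp u).
Proof.
move=> H; apply: (@eq_from_nth _ false); first by rewrite !size_mkseq.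
move=> j; rewrite size_mkseq => hj; rewrite !nth_mkseq // mxE.
rewrite (eq_bigr (fun i : 'I_8 => u 0 (inord (val i)) * Amat y (inord (val i)) (inord j)));
  last by move=> i _; rewrite inord_val.
rewrite -(big_mkord xpredT (fun i => u 0 (inord i) * Amat y (inord i) (inord j))).
rewrite psumr_eq0; last by move=> i _; apply: mulr_ge0 => //; exact: Amat_ge0.
rewrite -has_predC /index_iota subn0; apply: eq_in_has => i; rewrite mem_iota add0n => /andP[_ hi].
rewrite /= mulf_eq0 negb_or Amat_eq0 nth_mkseq // !inordK //.
Qed.

Definition runS (s : seq bool) (w : seq 'I_8) := foldl (fun s (x : 'I_8) => sstep (val x) s) s w.

Lemma run_ok w : forall u, nonneg u ->
  ((u *m (\big[mulmx/1%:M]_(k <- w) Amat k) *m e0^T) 0 0 == 0) = ~~ nth false (runS (supp u) w) 0.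
Proof.
elim: w => [|x w IH] u Hu /=.
  rewrite big_nil mulmx1 mxE (bigD1 ord0) //= !mxE /= mulr1 big1 ?addr0.
    rewrite negbK.
    by have -> : (inord 0 : 'I_8) = ord0 by apply: val_inj; rewrite /= inordK.
  move=> j Hj; rewrite !mxE.
  by have /negbTE -> : (j != 0%N :> nat) := Hj; rewrite mulr0.
by rewrite big_cons mulmxA IH ?step_supp //; exact: step_nonneg.
Qed.

Definition state := (seq bool * seq (nat * nat))%type.
Definition step Qs (st : state) (y : 'I_8) : state := (sstep (val y) st.1, pstep Qs y st.2).

Fixpoint explore Qs (fuel : nat) (todo R : seq state) : seq state :=
  match fuel with
  | 0 => R
  | f.+1 => match todo with
            | [::] => R
            | st :: todo' =>
              let nexts := undup [seq step Qs st (ord8 x) | x <- iota 0 8] in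
              let new := [seq y <- nexts | y \notin R] in
              explore Qs f (new ++ todo') (new ++ R)
            end
  end.

Definition checkR Qs (init : state) (R : seq state) :=
  (init \in R) && all (fun st => all (fun x => step Qs st (ord8 x) \in R) (iota 0 8) &&
     ((~~ nth false st.1 0) == has (fun ik => pmatch (spos Qs ik) [::]) st.2)) R.

Lemma ord8_val (y : 'I_8) : ord8 (val y) = y.
Proof. by apply: val_inj; rewrite /= modn_small. Qed.

Lemma checkR_ok Qs init R : checkR Qs init R ->
  forall st, st \in R -> forall w,
  ~~ nth false (runS st.1 w) 0 = has (fun ik => pmatch (spos Qs ik) w) st.2.
Proof.
case/andP=> _ /allP H st Hst w; elim: w st Hst => [|x w IH] st Hst.
  by case/andP: (H st Hst) => _ /eqP.
case/andP: (H st Hst) => /allP Hs _.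
have Hx : step Qs st x \in R.
  by rewrite -[x]ord8_val; apply: Hs; rewrite mem_iota add0n /=.
rewrite /= -pstep_ok; exact: (IH (step Qs st x) Hx).
Qed.

Definition initS (a b : bool) : seq bool := mkseq (fun j => j./2 == (2 * a + b)%N) 8.
Definition initP (Qs : seq (seq item)) : seq (nat * nat) := [seq (i, 0%N) | i <- iota 0 (size Qs)].
Definition initst a b : state := (initS a b, initP (Q a b)).
Definition Rab a b := explore (Q a b) 200 [:: initst a b] [:: initst a b].

Lemma initP_ok Qs w : has (fun ik => pmatch (spos Qs ik) w) (initP Qs) = satisfies_some Qs w.
Proof.
rewrite /initP has_map /spos /= /satisfies_some.
rewrite -{3}(mkseq_nth [::] Qs) /mkseq has_map.
by apply: eq_has => i /=; rewrite drop0.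
Qed.

Lemma Lvec_nonneg a b : nonneg (Lvec a b).
Proof. by move=> j; rewrite mxE; case: ifP. Qed.

Lemma Lvec_supp a b : supp (Lvec a b) = initS a b.
Proof.
apply: (@eq_from_nth _ false); first by rewrite !size_mkseq.
move=> j; rewrite size_mkseq => hj; rewrite !nth_mkseq // mxE inordK //.
by case: ifP => _; rewrite ?oner_eq0 ?eqxx.
Qed.

Lemma main a b w R : checkR (Q a b) (initst a b) R ->
  ((Lvec a b *m (\big[mulmx/1%:M]_(k <- w) Amat k) *m e0^T) 0 0 == 0) =
  satisfies_some (Q a b) w.
Proof.
move=> C; rewrite (run_ok _ (Lvec_nonneg a b)) Lvec_supp -initP_ok.
have Hin : initst a b \in R by case/andP: C.
exact: (checkR_ok C Hin w).
Qed.

Lemma c00 : checkR (Q false false) (initst false false) (Rab false false). Proof. vm_compute. reflexivity. Qed.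
Lemma c01 : checkR (Q false true) (initst false true) (Rab false true). Proof. vm_compute. reflexivity. Qed.
Lemma c10 : checkR (Q true false) (initst true false) (Rab true false). Proof. vm_compute. reflexivity. Qed.
Lemma c11 : checkR (Q true true) (initst true true) (Rab true true). Proof. vm_compute. reflexivity. Qed.

Theorem theorem8 (n : nat) (al be ga : n.-tuple bool) (a b : bool) :
  padp a b al be ga = 0 <-> satisfies_some (Q a b) (omega al be ga).
Proof.
have [R C] : exists R, checkR (Q a b) (initst a b) R.
  by case: a; case: b; eexists; [exact c11|exact c10|exact c01|exact c00].
rewrite /padp -(main _ C); split; [by move=> ->|by move/eqP].
Qed.
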